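(* Let $U=U_1\times\cdots\times U_m\subset\mathbb{R}^m_+$ (each $U_i\subseteq\mathbb{R}$) be convex, $C\subseteq\mathbb{R}^m$, $\overline{U}=U\cap C$. Let $f_1:\mathbb{R}^{n_1}\to\mathbb{R}$, $f_2:\mathbb{R}^{n_2}\to\mathbb{R}$ be convex with $f_1(0)=f_2(0)=0$, and for each $i\in[m]$ let $g_i:\mathbb{R}^{n_1}\times\mathbb{R}^{n_2}\to\mathbb{R}$ be concave in $(x,y)$ with $g_i(0,0)\ge0$. For a set $S$ define $$z^{\rm ad}(S)=\inf_{x,\ y:S\to\mathbb{R}^{n_2}}\Big\{f_1(x)+\sup_{u\in S}f_2(y(u)):\ g_i(x,y(u))\ge u_i\ \forall u\in S,\ \forall i\Big\},$$ $$z^{\rm st}(S)=\inf_{x,y}\{f_1(x)+f_2(y):\ g_i(x,y)\ge u_i\ \forall u\in S,\ \forall i\},$$ and $z_{\rm aro}=z^{\rm ad}(U)$, $z_{\rm acp}=z^{\rm ad}(\overline{U})$, $z_{\rm ro}=z^{\rm st}(U)$, $z_{\rm cp}=z^{\rm st}(\overline{U})$. Let $\gamma_{\rm ro}=\gamma(U^\downarrow,\Pi(\overline{U}^\downarrow))$ and $\gamma_{\rm aro}=\gamma(U^\downarrow,\overline{U}^\downarrow)$. If $z_{\rm acp}>0$ and $z_{\rm ro}<\infty$, then $$\frac{z_{\rm cp}}{z_{\rm ro}}\le\gamma_{\rm ro},\qquad\frac{z_{\rm acp}}{z_{\rm aro}}\le\gamma_{\rm aro}.$$ Furthermore, the bounds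 are tight.
   Context: $[m]=\{1,\dots,m\}$. For $S\subseteq\mathbb{R}^m_+$, $S^\downarrow=\{t\in\mathbb{R}^m_+:\exists s\in S,\ t\le s\text{ componentwise}\}$. $\Pi_i(S)$ is the projection of $S$ onto coordinate $i$ and $\Pi(S)=\Pi_1(S)\times\cdots\times\Pi_m(S)$. For $r\ge0$, $rS=\{rx:x\in S\}$; $\gamma(S_1,S_2)=\min\{\gamma\ge0:S_2\subseteq\gamma S_1\}$. *)

(* Defs.v *)
From HB Require Import structures.
From mathcomp Require Import all_boot all_order all_algebra.
From mathcomp Require Import classical_sets boolp reals constructive_ereal ereal.
Set Implicit Arguments. Unset Strict Implicit. Unset Printing Implicit Defensive.
Import Order.TTheory GRing.Theory Num.Theory.
Local Open Scope classical_set_scope.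
Local Open Scope ring_scope.

(* Vectors of R^k are row vectors 'rV[R]_k; the i-th coordinate of u is u ord0 i. *)
Section Defs.
Variable R : realType.

Definition prod_set m (Ui : 'I_m -> set R) : set 'rV[R]_m :=
  [set u | forall i, Ui i (u ord0 i)].

Definition orthant m : set 'rV[R]_m := [set u | forall i, 0 <= u ord0 i].

Definition cvx_set m (S : set 'rV[R]_m) :=
  forall u v t, S u -> S v -> 0 <= t <= 1 -> S (t *: u + (1 - t) *: v).

Definition cvx_fun n (f : 'rV[R]_n -> R) :=
  forall x y t, 0 <= t <= 1 -> f (t *: x + (1 - t) *: y) <= t * f x + (1 - t) * f y.

Definition ccv_fun2 n1 n2 (g : 'rV[R]_n1 -> 'rV[R]_n2 -> R) :=
  forall x x' y y' t, 0 <= t <= 1 ->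
    t * g x y + (1 - t) * g x' y' <= g (t *: x + (1 - t) *: x') (t *: y + (1 - t) *: y').

Definition downclosure m (S : set 'rV[R]_m) : set 'rV[R]_m :=
  [set t | (forall i, 0 <= t ord0 i) /\
           exists2 s, S s & forall i, t ord0 i <= s ord0 i].

Definition proj_i m (S : set 'rV[R]_m) (i : 'I_m) : set R :=
  [set s ord0 i | s in S].
Definition proj_box m (S : set 'rV[R]_m) : set 'rV[R]_m :=
  [set t | forall i, proj_i S i (t ord0 i)].

Definition scale_set m (r : R) (S : set 'rV[R]_m) : set 'rV[R]_m :=
  [set r *: x | x in S].

(* gamma(S1,S2) = min{ gamma >= 0 : S2 \subseteq gamma S1 } (taken as an inf in \bar R) *)
Definition gamma m (S1 S2 : set 'rV[R]_m) : \bar R :=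
  ereal_inf [set g%:E | g in [set g : R | 0 <= g /\ S2 `<=` scale_set g S1]].

Definition inst_ok m n1 n2 (f1 : 'rV[R]_n1 -> R) (f2 : 'rV[R]_n2 -> R)
    (g : 'I_m -> 'rV[R]_n1 -> 'rV[R]_n2 -> R) :=
  [/\ cvx_fun f1, cvx_fun f2, f1 0 = 0, f2 0 = 0 &
      forall i, ccv_fun2 (g i) /\ 0 <= g i 0 0].

(* z^ad(S): the adaptive problem, y : S -> R^{n2} (represented as a total function) *)
Definition z_ad m n1 n2 (f1 : 'rV[R]_n1 -> R) (f2 : 'rV[R]_n2 -> R)
    (g : 'I_m -> 'rV[R]_n1 -> 'rV[R]_n2 -> R) (S : set 'rV[R]_m) : \bar R :=
  ereal_inf [set z | exists (x : 'rV[R]_n1) (y : 'rV[R]_m -> 'rV[R]_n2),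
     (forall u, S u -> forall i, u ord0 i <= g i x (y u)) /\
     z = ((f1 x)%:E + ereal_sup [set (f2 (y u))%:E | u in S])%E].

Definition z_st m n1 n2 (f1 : 'rV[R]_n1 -> R) (f2 : 'rV[R]_n2 -> R)
    (g : 'I_m -> 'rV[R]_n1 -> 'rV[R]_n2 -> R) (S : set 'rV[R]_m) : \bar R :=
  ereal_inf [set z | exists (x : 'rV[R]_n1) (y : 'rV[R]_n2),
     (forall u, S u -> forall i, u ord0 i <= g i x y) /\
     z = (f1 x + f2 y)%:E].

End Defs.

(* Main.v *)
Require Import Defs.
From HB Require Import structures.
From mathcomp Require Import all_boot all_order all_algebra.
From mathcomp Require Import classical_sets boolp reals constructive_ereal ereal.
From mathcomp Require Import lra.
Import Order.TTheory GRing.Theory Num.Theory.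
Local Open Scope classical_set_scope.
Local Open Scope ring_scope.

Lemma ratio_le (R : realType) (A B : \bar R) (Sb : set (\bar R)) (G : set R) :
  B = ereal_inf Sb -> (0 < A)%E -> (A <= B)%E -> (B < +oo)%E ->
  (forall g, G g -> 0 <= g) ->
  ~ G 0 -> (forall g c, G g -> 0 < g -> g < 1 -> Sb c -> (A <= g%:E * c)%E) ->
  ((fine A / fine B)%:E <= ereal_inf [set g%:E | g in G])%E.
Proof.
move=> BE A0 AB Boo G0 nG0 H.
have [a Ae] : exists a, A = a%:E.
  case: A A0 AB {H} => [a| |] //; first by exists a.
  by move=> _; rewrite leye_eq => /eqP Be; rewrite Be in Boo.
have [b Be] : exists b, B = b%:E.
  case: B BE Boo AB {H} => [b| |] //; first by exists b.
  by rewrite Ae.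
rewrite Ae Be /= in A0 AB H *.
have {}BE : b%:E = ereal_inf Sb by rewrite -Be.
move: A0 AB; rewrite lte_fin lee_fin => a0 ab.
have b0 : 0 < b by lra.
apply: le_ereal_inf_tmp => _ [g Gg <-]; rewrite lee_fin ler_pdivrMr //.
have g0 := G0 g Gg.
case: (leP 1 g) => g1; first by nra.
have [c Sc cb] : exists2 c, Sb c & (c < (b + 1)%:E)%E.
  apply: ereal_inf_lt; rewrite -BE lte_fin; lra.
case: (eqVneq g 0) => [g00|gn0]; first by rewrite g00 in Gg.
have gp : 0 < g by rewrite lt_neqAle eq_sym gn0.
suff : ((a / g)%:E <= b%:E)%E.
  by rewrite lee_fin ler_pdivrMr // => h; nra.
rewrite BE; apply: le_ereal_inf_tmp => c' Sc'.
have := H g c' Gg gp g1 Sc'.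
case: c' Sc' => [r| |] _; rewrite ?leey //.
  by rewrite -EFinM !lee_fin ler_pdivrMr // mulrC.
by rewrite mulrNy gtr0_sg // mul1e leeNy_eq.
Qed.
Lemma scale_cvx {R : realType} {n} {f : 'rV[R]_n -> R} (x : 'rV[R]_n) {t : R} :
  cvx_fun f -> f 0 = 0 -> 0 <= t <= 1 -> f (t *: x + (1 - t) *: 0) <= t * f x.
Proof.
move=> cf f0 t01; have := cf x 0 t t01; rewrite f0 mulr0 addr0 //.
Qed.

Lemma scale_ccv {R : realType} {n1 n2} {h : 'rV[R]_n1 -> 'rV[R]_n2 -> R} x y {t : R} :
  ccv_fun2 h -> 0 <= h 0 0 -> 0 <= t <= 1 ->
  t * h x y <= h (t *: x + (1 - t) *: 0) (t *: y + (1 - t) *: 0).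
Proof.
move=> ch h0 t01; have := ch x 0 y 0 t t01.
have : 0 <= (1 - t) * h 0 0 by apply: mulr_ge0 => //; move/andP: t01 => [_ ?]; lra.
move=> h1 h2; lra.
Qed.

Lemma down_self {R : realType} {m} {S U : set 'rV[R]_m} {u} :
  U `<=` @orthant R m -> S `<=` U -> S u -> downclosure S u.
Proof. by move=> UO SU Su; split; [exact: UO (SU _ Su)| exists u]. Qed.

Lemma down_proj {R : realType} {m} {S : set 'rV[R]_m} :
  downclosure S `<=` proj_box (downclosure S).
Proof. by move=> u du i; exists u. Qed.

Lemma st_scale (R : realType) m n1 n2 (f1 : 'rV[R]_n1 -> R) (f2 : 'rV[R]_n2 -> R)
    (g : 'I_m -> 'rV[R]_n1 -> 'rV[R]_n2 -> R) (U Ubar : set 'rV[R]_m) x y (gm : R) :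
  inst_ok f1 f2 g -> U `<=` @orthant R m -> Ubar `<=` U ->
  0 <= gm -> gm <= 1 -> proj_box (downclosure Ubar) `<=` scale_set gm (downclosure U) ->
  (forall u, U u -> forall i, u ord0 i <= g i x y) ->
  (z_st f1 f2 g Ubar <= gm%:E * (f1 x + f2 y)%:E)%E.
Proof.
move=> [cf1 cf2 f10 f20 hg] UO UU g0 g1 sub feas.
have t01 : 0 <= gm <= 1 by rewrite g0 g1.
apply: ge_ereal_inf; exists (f1 (gm *: x + (1 - gm) *: 0) + f2 (gm *: y + (1 - gm) *: 0))%:E.
  exists (gm *: x + (1 - gm) *: 0), (gm *: y + (1 - gm) *: 0); split => // u Ubu i.
  have := sub u (down_proj _ (down_self UO UU Ubu)).
  move=> [w [_ [s Us ws]] wu].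
  have [cg g00] := hg i.
  apply: le_trans (scale_ccv x y cg g00 t01).
  rewrite -wu mxE; apply: ler_wpM2l => //.
  exact: le_trans (ws i) (feas s Us i).
rewrite -EFinM lee_fin mulrDr; apply: lerD; exact: scale_cvx.
Qed.

Lemma ad_scale (R : realType) m n1 n2 (f1 : 'rV[R]_n1 -> R) (f2 : 'rV[R]_n2 -> R)
    (g : 'I_m -> 'rV[R]_n1 -> 'rV[R]_n2 -> R) (U Ubar : set 'rV[R]_m) x y (M gm : R) :
  inst_ok f1 f2 g -> U `<=` @orthant R m -> Ubar `<=` U ->
  0 <= gm -> gm <= 1 -> downclosure Ubar `<=` scale_set gm (downclosure U) ->
  (forall u, U u -> forall i, u ord0 i <= g i x (y u)) ->
  (forall u, U u -> f2 (y u) <= M) ->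
  (z_ad f1 f2 g Ubar <= gm%:E * (f1 x + M)%:E)%E.
Proof.
move=> [cf1 cf2 f10 f20 hg] UO UU g0 g1 sub feas fM.
have t01 : 0 <= gm <= 1 by rewrite g0 g1.
have hs : forall u, exists s, Ubar u -> U s /\ forall i, u ord0 i <= gm * s ord0 i.
  move=> u; case: (pselect (Ubar u)) => [Ubu|nU]; last by exists 0.
  have := sub u (down_self UO UU Ubu).
  move=> [w [_ [s Us ws]] wu]; exists s => _; split => // i.
  rewrite -wu mxE; exact: ler_wpM2l.
have [sf hsf] := choice hs.
apply: ge_ereal_inf.
exists ((f1 (gm *: x + (1 - gm) *: 0))%:E +
   ereal_sup [set (f2 (gm *: y (sf u) + (1 - gm) *: 0))%:E | u in Ubar])%E.
  exists (gm *: x + (1 - gm) *: 0), (fun u => gm *: y (sf u) + (1 - gm) *: 0).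
  split => // u Ubu i.
  have [Us us] := hsf u Ubu.
  have [cg g00] := hg i.
  apply: le_trans (scale_ccv x (y (sf u)) cg g00 t01).
  apply: le_trans (us i) _; apply: ler_wpM2l => //; exact: feas.
rewrite -EFinM mulrDr EFinD; apply: leeD; first by rewrite lee_fin; exact: scale_cvx.
apply: ge_ereal_sup => _ [u Ubu <-]; rewrite lee_fin.
have [Us _] := hsf u Ubu.
apply: le_trans (scale_cvx _ cf2 f20 t01) _; apply: ler_wpM2l => //; exact: fM.
Qed.
Lemma zad_le_zst {R : realType} {m n1 n2} {f1 : 'rV[R]_n1 -> R} {f2 : 'rV[R]_n2 -> R}
    {g : 'I_m -> 'rV[R]_n1 -> 'rV[R]_n2 -> R} (S : set 'rV[R]_m) :
  (z_ad f1 f2 g S <= z_st f1 f2 g S)%E.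
Proof.
apply: le_ereal_inf_tmp => _ [x [y [feas ->]]].
apply: ge_ereal_inf; exists ((f1 x)%:E + ereal_sup [set (f2 ((fun=> y) u))%:E | u in S])%E.
  by exists x, (fun => y); split.
rewrite EFinD; apply: leeD => //; apply: ge_ereal_sup => _ [u _ <-] //.
Qed.

Lemma zst_mono {R : realType} {m n1 n2} {f1 : 'rV[R]_n1 -> R} {f2 : 'rV[R]_n2 -> R}
    {g : 'I_m -> 'rV[R]_n1 -> 'rV[R]_n2 -> R} (S T : set 'rV[R]_m) :
  S `<=` T -> (z_st f1 f2 g S <= z_st f1 f2 g T)%E.
Proof.
move=> ST; apply: ereal_inf_le_tmp => _ [x [y [feas ->]]].
exists x, y; split => // u Su; exact: feas (ST _ Su).
Qed.

Lemma zad_mono {R : realType} {m n1 n2} {f1 : 'rV[R]_n1 -> R} {f2 : 'rV[R]_n2 -> R}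
    {g : 'I_m -> 'rV[R]_n1 -> 'rV[R]_n2 -> R} (S T : set 'rV[R]_m) :
  S `<=` T -> (z_ad f1 f2 g S <= z_ad f1 f2 g T)%E.
Proof.
move=> ST; apply: le_ereal_inf_tmp => _ [x [y [feas ->]]].
apply: ge_ereal_inf; exists ((f1 x)%:E + ereal_sup [set (f2 (y u))%:E | u in S])%E.
  by exists x, y; split => // u Su; exact: feas (ST _ Su).
apply: leeD => //; apply: ereal_sup_le => _ [u Su <-]; exists u => //; exact: ST.
Qed.

Lemma zad_le0 {R : realType} {m n1 n2} {f1 : 'rV[R]_n1 -> R} {f2 : 'rV[R]_n2 -> R}
    {g : 'I_m -> 'rV[R]_n1 -> 'rV[R]_n2 -> R} (S : set 'rV[R]_m) :
  inst_ok f1 f2 g -> (forall u, S u -> forall i, u ord0 i <= 0) ->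
  (z_ad f1 f2 g S <= 0)%E.
Proof.
move=> [_ _ f10 f20 hg] S0.
apply: ge_ereal_inf; exists ((f1 0)%:E + ereal_sup [set (f2 ((fun=> 0) u))%:E | u in S])%E.
  exists 0, (fun=> 0); split => // u Su i; apply: le_trans (S0 u Su i) _; exact: (hg i).2.
rewrite f10 add0e; apply: ge_ereal_sup => _ [u _ <-]; by rewrite f20.
Qed.

Lemma zad_nonempty {R : realType} {m n1 n2} {f1 : 'rV[R]_n1 -> R} {f2 : 'rV[R]_n2 -> R}
    {g : 'I_m -> 'rV[R]_n1 -> 'rV[R]_n2 -> R} (S : set 'rV[R]_m) :
  (0 < z_ad f1 f2 g S)%E -> S !=set0.
Proof.
move=> zp; apply/set0P/negP => /eqP S0; move: zp; rewrite S0.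
suff -> : z_ad f1 f2 g set0 = -oo%E by [].
apply/eqP; rewrite eq_le leNye andbT; apply: ge_ereal_inf.
exists ((f1 0)%:E + ereal_sup [set (f2 ((fun=> 0 : 'rV[R]_n2) u))%:E | u in (set0 : set 'rV[R]_m)])%E => //.
  by exists 0, (fun=> 0); split.
by rewrite image_set0 ereal_sup0 addeNy.
Qed.

Lemma part1 {R : realType} {m} (U Ubar : set 'rV[R]_m) n1 n2 (f1 : 'rV[R]_n1 -> R)
    (f2 : 'rV[R]_n2 -> R) (g : 'I_m -> 'rV[R]_n1 -> 'rV[R]_n2 -> R) :
  U `<=` @orthant R m -> Ubar `<=` U -> inst_ok f1 f2 g ->
  (0 < z_ad f1 f2 g Ubar)%E -> (z_st f1 f2 g U < +oo)%E ->
  ((fine (z_st f1 f2 g Ubar) / fine (z_st f1 f2 g U))%:E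
      <= gamma (downclosure U) (proj_box (downclosure Ubar)))%E /\
  ((fine (z_ad f1 f2 g Ubar) / fine (z_ad f1 f2 g U))%:E
      <= gamma (downclosure U) (downclosure Ubar))%E.
Proof.
move=> UO UU io zp zoo.
have nG0 : ~ (downclosure Ubar `<=` scale_set 0 (downclosure U)).
  move=> h; have : (z_ad f1 f2 g Ubar <= 0)%E.
    apply: zad_le0 => // u Ubu i.
    have [w _ wu] := h u (down_self UO UU Ubu).
    by rewrite -wu mxE mul0r.
  by rewrite leNgt zp.
split.
- apply: (@ratio_le R _ _ _ _ erefl).
  + exact: lt_le_trans zp (zad_le_zst _).
  + exact: zst_mono.
  + exact: zoo.
  + by move=> ? [].
  + by move=> [_ h]; apply: nG0 => u du; apply: h; exact: down_proj.
  + move=> gm _ [_ Gg] gp g1 [x [y [feas ->]]].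
    exact: (@st_scale R m n1 n2 f1 f2 g U Ubar x y gm io UO UU (ltW gp) (ltW g1) Gg feas).
- apply: (@ratio_le R _ _ _ _ erefl) => //.
  + exact: zad_mono.
  + exact: le_lt_trans (zad_le_zst _) zoo.
  + by move=> ? [].
  + by move=> [_ h].
  + move=> gm _ [_ Gg] gp g1 [x [y [feas ->]]].
    have [u0 Ubu0] := zad_nonempty _ zp.
    case Es : (ereal_sup _) => [M| |].
    * rewrite -EFinD; apply: (@ad_scale _ _ _ _ _ _ _ _ _ _ _ _ _ io UO UU (ltW gp) (ltW g1) Gg feas).
      move=> u Uu; rewrite -lee_fin -Es; apply: ereal_sup_ubound; by exists u.
    * by rewrite addey // mulry gtr0_sg // mul1e leey.
    * have : ((f2 (y u0))%:E <= -oo)%E.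
        rewrite -Es; apply: ereal_sup_ubound; exists u0 => //; exact: UU.
      by rewrite leeNy_eq.
Qed.

Definition tf1 {R : realType} : 'rV[R]_1 -> R := fun x => `|x ord0 ord0|.
Definition tf2 {R : realType} : 'rV[R]_0 -> R := fun _ => 0.
Definition tg {R : realType} {m} (k : 'I_m) (a : 'I_m -> R) :
  'I_m -> 'rV[R]_1 -> 'rV[R]_0 -> R := fun i x _ => if i == k then x ord0 ord0 else a i.

Lemma tinst_ok {R : realType} {m} (k : 'I_m) (a : 'I_m -> R) :
  (forall i, 0 <= a i) -> inst_ok tf1 tf2 (tg k a).
Proof.
move=> a0; split.
- move=> x y t /andP[t0 t1]; rewrite /tf1 !mxE.
  apply: le_trans (ler_normD _ _) _.
  rewrite !normrM (ger0_norm t0) (ger0_norm (_ : 0 <= 1 - t)) //; lra.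
- by move=> x y t _; rewrite /tf2 !mulr0 addr0.
- by rewrite /tf1 mxE normr0.
- by [].
- move=> i; split; last by rewrite /tg; case: eqP => _; rewrite ?mxE.
  move=> x x' y y' t _; rewrite /tg; case: eqP => _; rewrite ?mxE //.
  by rewrite -mulrDl addrC subrK mul1r.
Qed.

Lemma tz_val {R : realType} {m} (k : 'I_m) (a : 'I_m -> R) (S : set 'rV[R]_m) :
  S !=set0 -> S `<=` @orthant R m -> (forall u, S u -> forall i, u ord0 i <= a i) ->
  has_ubound (proj_i S k) ->
  z_st tf1 tf2 (tg k a) S = (sup (proj_i S k))%:E /\
  z_ad tf1 tf2 (tg k a) S = (sup (proj_i S k))%:E.
Proof.
move=> [u0 Su0] SO Sa hub.
have hs : has_sup (proj_i S k) by split => //; exists (u0 ord0 k), u0.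
have ub : forall u, S u -> u ord0 k <= sup (proj_i S k).
  by move=> u Su; apply: sup_upper_bound => //; exists u.
have b0 : 0 <= sup (proj_i S k) by apply: le_trans (ub _ Su0); exact: SO.
have lbx : forall x : R, (forall u, S u -> u ord0 k <= x) -> sup (proj_i S k) <= x.
  move=> x hx; apply: ge_sup; first by exists (u0 ord0 k), u0.
  by move=> _ [u Su <-]; exact: hx.
have st_le : (z_st tf1 tf2 (tg k a) S <= (sup (proj_i S k))%:E)%E.
  apply: ge_ereal_inf; exists (tf1 (const_mx (sup (proj_i S k))) + tf2 0)%:E.
    exists (const_mx (sup (proj_i S k))), 0; split => // u Su i.
    rewrite /tg; case: eqP => [->|_]; last exact: Sa.
    by rewrite mxE; exact: ub.
  by rewrite /tf1 /tf2 mxE addr0 ger0_norm.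
have ad_ge : ((sup (proj_i S k))%:E <= z_ad tf1 tf2 (tg k a) S)%E.
  apply: le_ereal_inf_tmp => _ [x [y [feas ->]]].
  have h1 : sup (proj_i S k) <= tf1 x.
    apply: lbx => u Su; apply: le_trans (feas u Su k) _.
    by rewrite /tg eqxx /tf1; exact: ler_norm.
  rewrite -(addr0 (sup _)) EFinD; apply: leeD; first by rewrite lee_fin.
  by apply: ereal_sup_ubound; exists u0.
have := zad_le_zst (f1 := tf1) (f2 := tf2) (g := tg k a) S.
move=> h; split; apply/eqP; rewrite eq_le.
- by rewrite st_le (le_trans ad_ge h).
- by rewrite ad_ge (le_trans h st_le).
Qed.
Lemma exists_argmax {R : realType} {m} (F : 'I_m -> R) (j : 'I_m) :
  exists k, forall i, F i <= F k.
Proof.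
case: (arg_maxP F (i0 := j) (P := xpredT) isT) => k _ kmax.
by exists k => i; apply: kmax.
Qed.

Lemma tight {R : realType} {m} (Ui : 'I_m -> set R) (C : set 'rV[R]_m) :
  prod_set Ui `<=` @orthant R m ->
  (exists (n1 n2 : nat) (f1 : 'rV[R]_n1 -> R) (f2 : 'rV[R]_n2 -> R)
           (g : 'I_m -> 'rV[R]_n1 -> 'rV[R]_n2 -> R),
      [/\ inst_ok f1 f2 g, (0 < z_ad f1 f2 g (prod_set Ui `&` C))%E &
          (z_st f1 f2 g (prod_set Ui) < +oo)%E]) ->
  exists (k : 'I_m) (a : 'I_m -> R),
    [/\ inst_ok tf1 tf2 (tg k a), (0 < z_ad tf1 tf2 (tg k a) (prod_set Ui `&` C))%E,
        (z_st tf1 tf2 (tg k a) (prod_set Ui) < +oo)%E,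
        (fine (z_st tf1 tf2 (tg k a) (prod_set Ui `&` C)) /
           fine (z_st tf1 tf2 (tg k a) (prod_set Ui)))%:E =
          gamma (downclosure (prod_set Ui)) (proj_box (downclosure (prod_set Ui `&` C))) &
        (fine (z_ad tf1 tf2 (tg k a) (prod_set Ui `&` C)) /
           fine (z_ad tf1 tf2 (tg k a) (prod_set Ui)))%:E =
          gamma (downclosure (prod_set Ui)) (downclosure (prod_set Ui `&` C))].
Proof.
set U := prod_set Ui; set Ubar := U `&` C.
move=> UO [n1 [n2 [f1 [f2 [g [io zp zoo]]]]]].
have UU : Ubar `<=` U by move=> u [].
have [u0 Ubu0] := zad_nonempty _ zp.
have Uu0 := UU _ Ubu0.
have [_ [x0 [y0 [feas0 _]]] _] := ereal_inf_lt zoo.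
pose a i := sup (proj_i U i).
pose b i := sup (proj_i Ubar i).
have hubU : forall i, has_ubound (proj_i U i).
  by move=> i; exists (g i x0 y0) => _ [u Uu <-]; exact: feas0 u Uu i.
have hsU : forall i, has_sup (proj_i U i).
  by move=> i; split; [exists (u0 ord0 i), u0 | exact: hubU].
have ubU : forall u i, U u -> u ord0 i <= a i.
  by move=> u i Uu; apply: sup_upper_bound => //; exists u.
have hubB : forall i, has_ubound (proj_i Ubar i).
  by move=> i; exists (a i) => _ [u Ubu <-]; apply: ubU; exact: UU.
have hsB : forall i, has_sup (proj_i Ubar i).
  by move=> i; split; [exists (u0 ord0 i), u0 | exact: hubB].
have ubB : forall u i, Ubar u -> u ord0 i <= b i.
  by move=> u i Uu; apply: sup_upper_bound => //; exists u.
have a0 : forall i, 0 <= a i by move=> i; exact: le_trans (UO _ Uu0 i) (ubU u0 i Uu0).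
have ba : forall i, b i <= a i.
  move=> i; apply: ge_sup; first by exists (u0 ord0 i), u0.
  by move=> _ [u Ubu <-]; apply: ubU; exact: UU.
have [u1 Ubu1 [j u1j]] : exists2 u, Ubar u & exists j, 0 < u ord0 j.
  apply: contrapT => h.
  have : (z_ad f1 f2 g Ubar <= 0)%E.
    apply: zad_le0 => // u Ubu i; rewrite leNgt; apply/negP => hp.
    by apply: h; exists u => //; exists i.
  by rewrite leNgt zp.
pose rho i := if 0 < a i then b i / a i else 0.
have [k kmax] := exists_argmax rho j.
have bj : 0 < b j by apply: lt_le_trans u1j (ubB _ _ Ubu1).
have aj : 0 < a j by apply: lt_le_trans bj (ba j).
have rhoj : 0 < rho j by rewrite /rho aj divr_gt0.
have rhok : 0 < rho k by apply: lt_le_trans rhoj (kmax j).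
have ak : 0 < a k.
  by move: rhok; rewrite /rho; case: ifP => // _; rewrite ltxx.
have bk : b k = rho k * a k by rewrite /rho ak divfK // gt_eqF.
have bkp : 0 < b k by rewrite bk mulr_gt0.
have rho_le : forall i, b i <= rho k * a i.
  move=> i; case: (ltP 0 (a i)) => ai.
  - have : rho i <= rho k := kmax i.
    rewrite /rho ai => h; have ai0 : a i != 0 by rewrite gt_eqF.
    rewrite -(divfK ai0 (b i)).
    apply: ler_wpM2r; [exact: ltW | exact: h].
  - have ai0 : a i = 0 by apply/eqP; rewrite eq_le ai a0.
    by rewrite ai0 mulr0 -ai0.
have [stU adU] := tz_val k a U (ex_intro _ u0 Uu0) UO (fun u Uu i => ubU u i Uu) (hubU k).
have [stB adB] := tz_val k a Ubar (ex_intro _ u0 Ubu0)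
   (fun u Ubu => UO u (UU u Ubu)) (fun u Ubu i => ubU u i (UU u Ubu)) (hubB k).
have io' := tinst_ok k a a0.
have zp' : (0 < z_ad tf1 tf2 (tg k a) Ubar)%E by rewrite adB lte_fin.
have zoo' : (z_st tf1 tf2 (tg k a) U < +oo)%E by rewrite stU ltry.
have [P1 P2] := part1 U Ubar 1 0 tf1 tf2 (tg k a) UO UU io' zp' zoo'.
have rat1 : fine (z_st tf1 tf2 (tg k a) Ubar) / fine (z_st tf1 tf2 (tg k a) U) = rho k.
  by rewrite stB stU /= -/(b k) -/(a k) bk mulfK // gt_eqF.
have rat2 : fine (z_ad tf1 tf2 (tg k a) Ubar) / fine (z_ad tf1 tf2 (tg k a) U) = rho k.
  by rewrite adB adU /= -/(b k) -/(a k) bk mulfK // gt_eqF.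
have gro : (gamma (downclosure U) (proj_box (downclosure Ubar)) <= (rho k)%:E)%E.
  apply/lee_addgt0Pr => e e0; rewrite -EFinD; apply: ereal_inf_lbound.
  have rke : 0 < rho k + e by rewrite addr_gt0.
  exists (rho k + e) => //; split; first exact: ltW.
  move=> t ht.
  have tb : forall i, 0 <= t ord0 i /\ t ord0 i <= b i.
    move=> i; have [s [s0 [v Ubv sv]] si] := ht i.
    rewrite -si; split; first exact: s0 i.
    exact: le_trans (sv i) (ubB v i Ubv).
  exists ((rho k + e)^-1 *: t); last by rewrite scalerA divff ?scale1r // gt_eqF.
  split.
    by move=> i; rewrite mxE; apply: mulr_ge0; [rewrite invr_ge0 ltW | exact: (tb i).1].
  have hv : forall i, exists v, U v /\ ((rho k + e)^-1 *: t) ord0 i <= v ord0 i.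
    move=> i; rewrite mxE.
    case: (ltP 0 (a i)) => ai.
    - have lt : (rho k + e)^-1 * t ord0 i < a i.
        rewrite mulrC ltr_pdivrMr //.
        have := (tb i).2; have := rho_le i; nra.
      have hpos : 0 < a i - (rho k + e)^-1 * t ord0 i by rewrite subr_gt0.
      have [_ [v Uv <-] hr] := sup_adherent hpos (hsU i).
      exists v; split => //; apply: ltW; move: hr; rewrite -/(a i); lra.
    - exists u0; split => //; apply: le_trans (UO _ Uu0 i).
      apply: mulr_ge0_le0; first by rewrite invr_ge0 ltW.
      exact: le_trans (tb i).2 (le_trans (ba i) ai).
  have [vf hvf] := choice hv.
  exists (\row_i (vf i) ord0 i).
    by move=> i; rewrite mxE; have [Uv _] := hvf i; exact: Uv i.
  by move=> i; rewrite [X in _ <= X]mxE; exact: (hvf i).2.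
have garo : (gamma (downclosure U) (downclosure Ubar) <=
             gamma (downclosure U) (proj_box (downclosure Ubar)))%E.
  apply: ereal_inf_le_tmp => _ [gm [g0 h] <-]; exists gm => //; split => //.
  by move=> u du; apply: h; exact: down_proj.
exists k, a; split => //.
- apply/eqP; rewrite eq_le P1 /= rat1; exact: gro.
- apply/eqP; rewrite eq_le P2 /= rat2; exact: le_trans garo gro.
Qed.

Theorem theorem9 (R : realType) (m : nat) (Ui : 'I_m -> set R) (C : set 'rV[R]_m) :
  let U := prod_set Ui in
  let Ubar := U `&` C in
  let gamma_ro := gamma (downclosure U) (proj_box (downclosure Ubar)) in
  let gamma_aro := gamma (downclosure U) (downclosure Ubar) in
  cvx_set U -> U `<=` @orthant R m ->
  (* the bounds *)
  (forall (n1 n2 : nat) (f1 : 'rV[R]_n1 -> R) (f2 : 'rV[R]_n2 -> R)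
          (g : 'I_m -> 'rV[R]_n1 -> 'rV[R]_n2 -> R),
     inst_ok f1 f2 g ->
     (0 < z_ad f1 f2 g Ubar)%E -> (z_st f1 f2 g U < +oo)%E ->
     ((fine (z_st f1 f2 g Ubar) / fine (z_st f1 f2 g U))%:E <= gamma_ro)%E /\
     ((fine (z_ad f1 f2 g Ubar) / fine (z_ad f1 f2 g U))%:E <= gamma_aro)%E)
  /\
  (* tightness: whenever the setting is non-vacuous for U and C,
     each bound is attained by some instance *)
  ((exists (n1 n2 : nat) (f1 : 'rV[R]_n1 -> R) (f2 : 'rV[R]_n2 -> R)
           (g : 'I_m -> 'rV[R]_n1 -> 'rV[R]_n2 -> R),
      [/\ inst_ok f1 f2 g, (0 < z_ad f1 f2 g Ubar)%E & (z_st f1 f2 g U < +oo)%E]) ->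
   (exists (n1 n2 : nat) (f1 : 'rV[R]_n1 -> R) (f2 : 'rV[R]_n2 -> R)
           (g : 'I_m -> 'rV[R]_n1 -> 'rV[R]_n2 -> R),
      [/\ inst_ok f1 f2 g, (0 < z_ad f1 f2 g Ubar)%E, (z_st f1 f2 g U < +oo)%E &
          (fine (z_st f1 f2 g Ubar) / fine (z_st f1 f2 g U))%:E = gamma_ro]) /\
   (exists (n1 n2 : nat) (f1 : 'rV[R]_n1 -> R) (f2 : 'rV[R]_n2 -> R)
           (g : 'I_m -> 'rV[R]_n1 -> 'rV[R]_n2 -> R),
      [/\ inst_ok f1 f2 g, (0 < z_ad f1 f2 g Ubar)%E, (z_st f1 f2 g U < +oo)%E &
          (fine (z_ad f1 f2 g Ubar) / fine (z_ad f1 f2 g U))%:E = gamma_aro])).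
Proof.
move=> U Ubar gamma_ro gamma_aro cU UO.
have UU : Ubar `<=` U by move=> u [].
split.
- move=> n1 n2 f1 f2 g io zp zoo.
  exact: (part1 U Ubar n1 n2 f1 f2 g UO UU io zp zoo).
- move=> ne; have [k [a [io zp zoo r1 r2]]] := tight Ui C UO ne.
  by split; exists 1%N, 0%N, tf1, tf2, (tg k a); split.
Qed.
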